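(* Let $A$ be a finite alphabet. An infinite word $x$ over $A$ is normal if and only if there is a positive number $C$ such that for infinitely many lengths $\ell$, for every word $w$ of length $\ell$, $$\limsup_{N\to\infty}\frac{|x[1..\ell N]|^{al}_w}{N}<\frac{C}{|A|^\ell}.$$
   Context: $x[i..j]$ is the factor of $x$ from position $i$ to $j$ (positions start at 1). For words $v,w$, $|v|^{al}_w=|\{i: v[i..i+|w|-1]=w,\ i\equiv1\bmod|w|\}|$ (aligned occurrences). $x$ is normal if for every $\ell\ge1$ and every $u\in A^\ell$, $\lim_{n\to\infty}|x[1..n]|^{al}_u/(n/\ell)=|A|^{-\ell}$. *)

(* Defs.v *)
From mathcomp Require Import all_boot.
From Stdlib Require Import Reals.
From Coquelicot Require Import Coquelicot.
Set Implicit Arguments.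
Unset Strict Implicit.
Unset Printing Implicit Defensive.

(* An infinite word over A: position i (1-based in the paper) is x (i-1). *)
Definition word_prefix (A : Type) (x : nat -> A) (n : nat) : seq A := mkseq x n.

(* |v|^{al}_w : number of 1-based positions i with v[i..i+|w|-1] = w and
   i = 1 mod |w|; in 0-based indexing i ranges over 0..|v|-|w| with
   i = 0 mod |w|. *)
Definition aligned_occ (A : eqType) (v w : seq A) : nat :=
  (count (fun i => (i %% size w == 0%nat) && (take (size w) (drop i v) == w))
        (seq.iota 0%nat (size v - size w).+1))%N.

Definition normal (A : finType) (x : nat -> A) : Prop :=
  forall (l : nat) (u : seq A), (0 < l)%nat -> size u = l ->
    is_lim_seq (fun n => (INR (aligned_occ (word_prefix x n) u) / (INR n / INR l))%R)
               (Finite (/ (INR #|A| ^ l))%R).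

(* Main.v *)
Require Import Defs.
From HB Require Import structures.
From mathcomp Require Import all_boot.
From Stdlib Require Import Reals Lra Lia.
From Coquelicot Require Import Coquelicot.
From mathcomp Require Import zify.

Set Implicit Arguments.
Unset Strict Implicit.
Unset Printing Implicit Defensive.

Open Scope nat_scope.

Section Words.
Variable A : finType.

Fixpoint words (n : nat) : seq (seq A) :=
  if n is n'.+1 then [seq a :: w | a <- enum A, w <- words n'] else [:: [::]].

Lemma size_words n : size (words n) = expn #|A| n.
Proof. elim: n => [|n IH] //=. by rewrite size_allpairs IH -cardE expnS. Qed.

Lemma mem_words n w : (w \in words n) = (size w == n).
Proof.
elim: n w => [|n IH] [|a w] //=.
- by apply/allpairsP => [[[b v]] /= [_ _ H]].
- rewrite eqSS. apply/allpairsP/idP => [[[b v]] /= [_ Hv [Ha Hw]]|Hs].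
  + by subst; rewrite -IH.
  + by exists (a, w); rewrite /= mem_enum IH.
Qed.

Lemma uniq_words n : uniq (words n).
Proof.
elim: n => [|n IH] //=. apply: allpairs_uniq => //; first exact: enum_uniq.
by move=> [a w] [b v] _ _ /= [-> ->].
Qed.

Lemma big_words_cat (R : Type) (idx : R) (op : Monoid.law idx) m n (F : seq A -> R) :
  \big[op/idx]_(w <- words (m + n)) F w =
  \big[op/idx]_(p <- words m) \big[op/idx]_(w <- words n) F (p ++ w).
Proof.
elim: m F => [|m IH] F; first by rewrite add0n /= big_seq1.
rewrite addSn /= !big_allpairs_dep /=. apply: eq_bigr => a _. by rewrite IH.
Qed.

End Words.

Section Occ.
Variable A : eqType.

Definition Pocc (v u : seq A) (i : nat) : bool :=
  (i %% size u == 0) && (take (size u) (drop i v) == u).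

Definition occN (v u : seq A) := count (Pocc v u) (seq.iota 0 (size v)).

Lemma take_drop_eq_size (v u : seq A) i : 0 < size u ->
  take (size u) (drop i v) = u -> i + size u <= size v.
Proof.
move=> Hu H. have := congr1 size H. rewrite size_take size_drop.
case: ltnP => H1 H2; lia.
Qed.

Lemma take_drop_cat (v w : seq A) i m :
  i + m <= size v -> take m (drop i (v ++ w)) = take m (drop i v).
Proof.
move=> H. rewrite !take_drop takel_cat //. lia.
Qed.

Lemma count_iota_split (P : pred nat) a b :
  count P (seq.iota 0 (a + b)) = count P (seq.iota 0 a) + count (fun o => P (a + o)) (seq.iota 0 b).
Proof.
rewrite iotaD count_cat add0n; congr (_ + _).
by rewrite -{1}(addn0 a) iotaDl count_map.
Qed.

Lemma count_false (P : pred nat) s : (forall i, i \in s -> P i = false) -> count P s = 0.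
Proof.
move=> H. by rewrite (eq_in_count (a2 := pred0)) ?count_pred0 // => i /H ->.
Qed.

Lemma occ_norm (v u : seq A) : 0 < size u -> aligned_occ v u = occN v u.
Proof.
move=> Hu. rewrite /aligned_occ /occN.
have Hf : forall i, size v < i + size u -> Pocc v u i = false.
  move=> i Hi. rewrite /Pocc. case E: (take _ _ == _) => //.
  move/eqP: E => /(take_drop_eq_size Hu). lia. 
  by rewrite andbF.
case: (leqP (size u) (size v)) => H.
- have -> : size v = (size v - size u).+1 + (size v - (size v - size u).+1) by lia.
  rewrite count_iota_split.
  rewrite (@count_false _ (seq.iota 0 (size v - (size v - size u).+1))) ?addn0.
  + by have -> : (size v - size u).+1 + (size v - (size v - size u).+1) - size u = size v - size u by lia.
  + move=> i _. apply: Hf. lia.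
- have -> : (size v - size u).+1 = 1 by lia.
  rewrite count_false; last by move=> i _; apply: Hf; lia.
  rewrite (count_false (P := fun i => _ && _)) // => i; rewrite mem_iota => Hi.
  by have := Hf i; rewrite /Pocc => ->; lia.
Qed.

Lemma occ_mono (v w u : seq A) : 0 < size u -> occN v u <= occN (v ++ w) u.
Proof.
move=> Hu. rewrite /occN size_cat count_iota_split.
apply: leq_trans (leq_addr _ _). apply: sub_count => i.
rewrite /Pocc => /andP [-> /eqP E]. apply/eqP.
by rewrite take_drop_cat // take_drop_eq_size.
Qed.

Definition cnt (u : seq A) (r : nat) (w : seq A) : nat :=
  count (fun o => ((r + o) %% size u == 0) && (take (size u) (drop o w) == u))
        (seq.iota 0 (size w)).

Lemma cnt_mod u r w : cnt u r w = cnt u (r %% size u) w.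
Proof. by apply: eq_count => o; rewrite modnDml. Qed.

Lemma occ_cat_le (v w u : seq A) : 0 < size u ->
  occN (v ++ w) u <= occN v u + size u + cnt u (size v) w.
Proof.
move=> Hu. rewrite /occN size_cat count_iota_split. apply: leq_add.
- set s := seq.iota 0 (size v).
  have H1 : count (Pocc (v ++ w) u) s <= count (predU (Pocc v u) (fun i => size v < i + size u)) s.
    apply: sub_count => i. rewrite /Pocc /= => /andP [Hm /eqP E].
    case: (leqP (i + size u) (size v)) => Hi; last by rewrite orbT.
    by rewrite /= /Pocc -(take_drop_cat w Hi) E eqxx (eqP Hm).
  have H2 := count_predUI (Pocc v u) (fun i => size v < i + size u) s.
  have H3 : count (fun i => size v < i + size u) s <= size u.
    rewrite /s.
    have -> : size v = (size v - size u) + (size v - (size v - size u)) by lia.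
    rewrite count_iota_split count_false; last by move=> i; rewrite mem_iota => Hi; lia.
    apply: leq_trans (count_size _ _) _. rewrite size_iota. lia.
  lia.
- apply: eq_leq. apply: eq_count => o. rewrite /Pocc.
  by rewrite drop_cat ltnNge leq_addr /= addKn.
Qed.

Lemma dvd_lt_add L i n : 0 < L -> i %% L = 0 -> n %% L = 0 -> i < n -> i + L <= n.
Proof.
move=> HL Hi Hn Hlt.
have Ei := divn_eq i L. have En := divn_eq n L. rewrite Hi addn0 in Ei. rewrite Hn addn0 in En.
have : i %/ L < n %/ L.
  rewrite ltnNge; apply/negP => H. have := leq_mul H (leqnn L). rewrite -Ei -En. lia.
move=> H. have := leq_mul H (leqnn L). rewrite mulSn -Ei -En. lia.
Qed.

Lemma occ_cat_block (v w t : seq A) : 0 < size t -> size v %% size t = 0 ->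
  size w = size t -> occN (v ++ w) t = occN v t + (w == t).
Proof.
move=> Ht Hv Hw. rewrite /occN size_cat count_iota_split. congr (_ + _).
- apply: eq_in_count => i; rewrite mem_iota => /andP [_ Hi]. rewrite /Pocc.
  case E: (i %% size t == 0) => //=.
  rewrite take_drop_cat //. apply: dvd_lt_add => //. exact/eqP.
- rewrite Hw /Pocc. have Hn : size t = (size t).-1.+1 by lia.
  rewrite [in seq.iota _ _]Hn /= addn0 Hv eqxx /= (drop_size_cat _ (erefl _)).
  rewrite take_oversize ?Hw //.
  rewrite count_false ?addn0 // => o; rewrite mem_iota => Ho.
  rewrite -modnDml Hv add0n modn_small; last by lia.
  by case: o Ho.
Qed.

End Occ.

Section Prefix.
Variable A : eqType.
Variable x : nat -> A.

Definition blk (L j : nat) : seq A := mkseq (fun k => x (j * L + k)) L.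

Lemma prefix_add a b : word_prefix x (a + b) = word_prefix x a ++ mkseq (fun k => x (a + k)) b.
Proof.
rewrite /word_prefix /mkseq iotaD map_cat add0n; congr (_ ++ _).
by rewrite -[in seq.iota a _](addn0 a) iotaDl -map_comp.
Qed.

Lemma prefix_succ L N : word_prefix x (L * N.+1) = word_prefix x (L * N) ++ blk L N.
Proof.
rewrite mulnS addnC prefix_add /blk; congr (_ ++ _); apply: eq_mkseq => k.
by rewrite mulnC.
Qed.

Lemma size_prefix n : size (word_prefix x n) = n.
Proof. exact: size_mkseq. Qed.

Lemma iota_succ N : seq.iota 0 N.+1 = seq.iota 0 N ++ [:: N].
Proof. by rewrite -addn1 iotaD. Qed.

Lemma occ_blocks L N t : size t = L -> 0 < L ->
  occN (word_prefix x (L * N)) t = count (fun j => blk L j == t) (seq.iota 0 N).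
Proof.
move=> Ht HL. elim: N => [|N IH]; first by rewrite muln0.
rewrite prefix_succ occ_cat_block ?Ht // ?size_prefix ?IH ?iota_succ ?count_cat /= ?addn0 //.
- by rewrite modnMr.
- by rewrite size_mkseq.
Qed.

Lemma occ_blocks_le L N u : 0 < size u ->
  occN (word_prefix x (L * N)) u <=
  \sum_(j <- seq.iota 0 N) (size u + cnt u (j * L) (blk L j)).
Proof.
move=> Hu. elim: N => [|N IH]; first by rewrite muln0.
rewrite prefix_succ iota_succ big_cat big_seq1 /=.
apply: leq_trans (occ_cat_le _ _ Hu) _. rewrite size_prefix -addnA leq_add // mulnC //=.
Qed.

End Prefix.

Open Scope R_scope.
Lemma Rplus_assoc' : associative Rplus.
Proof. move=> a b c; ring. Qed.
HB.instance Definition _ := Monoid.isComLaw.Build R 0%R Rplus Rplus_assoc' Rplus_comm Rplus_0_l.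

Notation sR s F := (\big[Rplus/0%R]_(i <- s) F i).

Section RSums.
Variable T : Type.

Lemma sR_nil (F : T -> R) : sR [::] F = 0.
Proof. by rewrite big_nil. Qed.

Lemma sR_cons (F : T -> R) a s : sR (a :: s) F = F a + sR s F.
Proof. by rewrite big_cons. Qed.

Lemma sR_add (F G : T -> R) s : sR s (fun i => F i + G i) = sR s F + sR s G.
Proof. elim: s => [|a s IH]; rewrite ?sR_nil ?sR_cons ?IH; lra. Qed.

Lemma sR_scal (F : T -> R) c s : sR s (fun i => c * F i) = c * sR s F.
Proof. elim: s => [|a s IH]; rewrite ?sR_nil ?sR_cons ?IH; lra. Qed.

Lemma sR_const c s : sR s (fun _ : T => c) = INR (size s) * c.
Proof.
elim: s => [|a s IH]; first by rewrite sR_nil /=; ring.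
rewrite sR_cons IH. have -> : size (a :: s) = (size s).+1 by []. rewrite S_INR; ring.
Qed.

Lemma sR_ext (F G : T -> R) s : (forall i, List.In i s -> F i = G i) -> sR s F = sR s G.
Proof.
elim: s => [|a s IH] H; rewrite ?sR_nil ?sR_cons //.
rewrite H /= ?IH //; [move=> i Hi; apply: H; by right | by left].
Qed.

Lemma sR_le (F G : T -> R) s : (forall i, List.In i s -> F i <= G i) -> sR s F <= sR s G.
Proof.
elim: s => [|a s IH] H; rewrite ?sR_nil ?sR_cons; first lra.
have := H a (or_introl erefl). have : sR s F <= sR s G by apply: IH => i Hi; apply: H; right.
lra.
Qed.

Lemma INR_sum (f : T -> nat) s : INR (\sum_(i <- s) f i)%nat = sR s (fun i => INR (f i)).
Proof. elim: s => [|a s IH]; rewrite ?big_nil ?sR_nil ?big_cons ?sR_cons ?plus_INR ?IH //. Qed.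

Lemma INR_count (P : pred T) s : sR s (fun i => INR (P i)) = INR (count P s).
Proof. elim: s => [|a s IH]; rewrite ?sR_nil ?sR_cons //= plus_INR IH. by case: (P a). Qed.

Lemma sum_sq_inner (W : seq T) e (d : T -> R) :
  sR W (fun w => (e + d w) ^ 2) = INR (size W) * e ^ 2 + 2 * e * sR W d + sR W (fun w => d w ^ 2).
Proof.
elim: W => [|a s IH]; first by rewrite !sR_nil /=; ring.
rewrite !sR_cons IH. have -> : size (a :: s) = (size s).+1 by []. rewrite S_INR; ring.
Qed.

End RSums.

Lemma sum_sq_split (T1 T2 : Type) (P : seq T1) (W : seq T2) (e : T1 -> R) (d : T2 -> R) :
  sR P (fun p => sR W (fun w => (e p + d w) ^ 2)) =
  INR (size W) * sR P (fun p => e p ^ 2) + 2 * sR P e * sR W d + INR (size P) * sR W (fun w => d w ^ 2).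
Proof.
elim: P => [|a s IH]; first by rewrite !sR_nil /=; ring.
rewrite !sR_cons IH sum_sq_inner. have -> : size (a :: s) = (size s).+1 by []. rewrite S_INR; ring.
Qed.

Lemma INR_expn m n : INR (expn m n) = INR m ^ n.
Proof. elim: n => [|n IH]; rewrite ?expn0 ?expnS ?mult_INR ?IH //=. Qed.

Lemma sR_lin (T : Type) (F : T -> R) a b s :
  sR s (fun i => a * F i + b) = a * sR s F + INR (size s) * b.
Proof. by rewrite sR_add sR_scal sR_const. Qed.

Section Variance.
Variable A : finType.
Variable u : seq A.
Hypothesis Hl : (0 < size u)%nat.
Local Notation l := (size u).
Local Open Scope nat_scope.

Definition Kc (r n : nat) : nat :=
  count (fun o => ((r + o) %% l == 0) && (o + l <= n))%nat (seq.iota 0 n).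

Lemma count_first_slot r (Q : nat -> bool) : (r %% l = 0)%nat ->
  count (fun o => ((r + o) %% l == 0) && Q o)%nat (seq.iota 0 l) = nat_of_bool (Q 0%nat).
Proof.
move=> Hr. have Hn : l = l.-1.+1 by lia.
rewrite [in seq.iota _ _]Hn /= addn0 Hr eqxx /=.
rewrite count_false ?addn0 // => o; rewrite mem_iota => Ho.
rewrite -modnDml Hr add0n modn_small; last by lia.
by case: o Ho.
Qed.

Lemma cnt_cons_ne r c w : (r %% l != 0)%nat -> cnt u r (c :: w) = cnt u r.+1 w.
Proof.
move=> H. rewrite /cnt. have -> : size (c :: w) = (1 + size w)%nat by [].
rewrite count_iota_split /= !addn0 (negbTE H) /= add0n. apply: eq_count => o.
by rewrite add0n add1n addnS -addSn.
Qed.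

Lemma Kc_succ_ne r n : (r %% l != 0)%nat -> Kc r n.+1 = Kc r.+1 n.
Proof.
move=> H. rewrite /Kc -add1n count_iota_split /= !addn0 (negbTE H) /= add0n. apply: eq_count => o.
by rewrite add1n addnS -addSn addSn ltnS.
Qed.

Lemma cnt_cat_eq r p w : (r %% l = 0)%nat -> size p = l ->
  cnt u r (p ++ w) = ((p == u) + cnt u (r + l) w)%nat.
Proof.
move=> Hr Hp. rewrite /cnt size_cat Hp count_iota_split. congr (_ + _)%nat.
- rewrite (@count_first_slot r (fun o => take l (drop o (p ++ w)) == u)) //.
  by rewrite drop0 take_size_cat.
- apply: eq_count => o. by rewrite addnA drop_cat Hp ltnNge leq_addr /= addKn.
Qed.

Lemma Kc_cat r n : (r %% l = 0)%nat -> Kc r (l + n) = (1 + Kc (r + l) n)%nat.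
Proof.
move=> Hr. rewrite /Kc count_iota_split (@count_first_slot r (fun o => o + l <= l + n)%nat) //.
rewrite add0n leq_addr /=. congr (_ + _)%nat. apply: eq_count => o.
by rewrite addnA; congr (_ && _); lia.
Qed.

Lemma cnt_small r w : (size w < l)%nat -> cnt u r w = 0%nat.
Proof.
move=> H. rewrite /cnt count_false // => o _.
case E: (take _ _ == u); last by rewrite andbF.
move/eqP: E => /(take_drop_eq_size Hl) Hc. exfalso. move: H; rewrite ltnNge; move/negP; apply. exact: leq_trans (leq_addl o _) Hc.
Qed.

Lemma Kc_small r n : (n < l)%nat -> Kc r n = 0%nat.
Proof. move=> H. rewrite /Kc count_false // => o _. have -> : (o + l <= n) = false by lia. by rewrite andbF. Qed.

Lemma Kc_bound n r : Kc r n * l <= n + l.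
Proof.
move: n r; elim/ltn_ind => n IH r.
case: (eqVneq (r %% l) 0) => Hr.
- case: (ltnP n l) => Hn; first by rewrite Kc_small.
  have En : n = l + (n - l) by lia.
  rewrite En Kc_cat // mulnDl mul1n.
  have := IH (n - l) ltac:(lia) (r + l). lia.
- case: n IH => [|n] IH; first by rewrite /Kc.
  rewrite Kc_succ_ne //. have := IH n (ltnSn n) r.+1. lia.
Qed.

Definition qR : R := (INR #|A| ^ l)%R.

Lemma variance n r :
  sR (words A n) (fun w => (qR * INR (cnt u r w) - INR (Kc r n)) ^ 2)%R =
  (INR #|A| ^ n * INR (Kc r n) * (qR - 1))%R.
Proof.
move: n r; elim/ltn_ind => n IH r.
case: (eqVneq (r %% l) 0) => Hr.
- case: (ltnP n l) => Hn.
  + rewrite Kc_small // (eq_big_seq (fun _ => 0%R)); last first.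
      move=> w; rewrite mem_words => /eqP Hw. rewrite cnt_small ?Hw //=. ring.
    rewrite big1_eq /=. ring.
  + pose n' := n - l. have En : n = l + n' by rewrite /n'; lia.
    rewrite En big_words_cat Kc_cat //.
    pose e := fun p : seq A => (qR * INR (p == u) - 1)%R.
    pose d := fun w : seq A => (qR * INR (cnt u (r + l) w) - INR (Kc (r + l) n'))%R.
    rewrite (eq_big_seq (fun p => sR (words A n') (fun w => (e p + d w) ^ 2)))%R; last first.
      move=> p; rewrite mem_words => /eqP Hp. apply: eq_bigr => w _.
      rewrite cnt_cat_eq // !plus_INR /e /d. change (INR 1) with 1%R. ring.
    rewrite sum_sq_split.
    have Hb : sR (words A l) (fun p => INR (p == u)) = 1%R.
      rewrite INR_count.
      have -> : count (fun p => p == u) (words A l) = count_mem u (words A l) by apply: eq_count.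
      by rewrite count_uniq_mem ?uniq_words // mem_words eqxx.
    have Hsz : forall m, INR (size (words A m)) = (INR #|A| ^ m)%R.
      by move=> m; rewrite size_words INR_expn.
    have He : sR (words A l) e = 0%R.
      rewrite (eq_bigr (fun p => qR * INR (p == u) + (-1)))%R; last by move=> p _; rewrite /e; ring.
      rewrite sR_lin Hb Hsz /qR. ring.
    have He2 : sR (words A l) (fun p => e p ^ 2)%R = (qR * (qR - 1))%R.
      rewrite (eq_bigr (fun p => (qR * qR - 2 * qR) * INR (p == u) + 1))%R; last first.
        move=> p _; rewrite /e; case: (p == u) => /=; ring.
      rewrite sR_lin Hb Hsz /qR. ring.
    rewrite He He2 (IH n' ltac:(lia) (r + l)) !Hsz pow_add plus_INR /qR /=. ring.
- case: n IH => [|n] IH.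
  + rewrite /= big_seq1 /cnt /Kc /=. ring.
  + change (words A n.+1) with [seq c :: w | c <- enum A, w <- words A n]. rewrite big_allpairs_dep Kc_succ_ne //.
    rewrite (eq_bigr (fun _ => INR #|A| ^ n * INR (Kc r.+1 n) * (qR - 1)))%R; last first.
      move=> c _. rewrite -(IH n (ltnSn n) r.+1). apply: eq_bigr => w _.
      by rewrite cnt_cons_ne.
    rewrite sR_const -tech_pow_Rmult. have -> : INR (size (enum A)) = INR #|A| by rewrite cardE. ring.
Qed.

End Variance.

Lemma Rabs_le_sq (d T : R) : (0 < T)%R -> (Rabs d <= d ^ 2 / T + T)%R.
Proof.
move=> HT. have H2 : (d ^ 2 = Rabs d * Rabs d)%R.
  rewrite -Rabs_mult Rabs_right; first ring. have := Rle_0_sqr d. rewrite /Rsqr. lra.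
have Ha := Rabs_pos d. set y := Rabs d in H2 Ha *. rewrite H2.
apply: (Rmult_le_reg_r T) => //. field_simplify; last lra.
nra.
Qed.

Lemma sR_ge0 (T : Type) (F : T -> R) s : (forall i, (0 <= F i)%R) -> (0 <= sR s F)%R.
Proof. move=> H. elim: s => [|a s IH]; rewrite ?sR_nil ?sR_cons; first lra. have := H a; lra. Qed.

Lemma sR_ge_term (T : eqType) (F : T -> R) s i : (forall i, (0 <= F i)%R) -> i \in s -> (F i <= sR s F)%R.
Proof.
move=> H. elim: s => [|a s IH] //. rewrite in_cons sR_cons => /orP [/eqP ->|Hi].
- have := sR_ge0 s H. lra.
- have := IH Hi. have := H a. lra.
Qed.

Lemma sR_pick (T : eqType) (G : T -> R) W a : uniq W -> a \in W ->
  sR W (fun t => INR (a == t) * G t)%R = G a.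
Proof.
move=> HU Ha. rewrite (bigD1_seq a) //= eqxx big1 /=; first ring.
move=> t /negbTE Ht. rewrite eq_sym Ht /=. ring.
Qed.

Lemma sR_regroup (I : Type) (T : eqType) (s : seq I) (f : I -> T) (W : seq T) (G : T -> R) :
  uniq W -> (forall i, f i \in W) ->
  sR s (fun i => G (f i)) = sR W (fun t => INR (count (fun i => f i == t) s) * G t)%R.
Proof.
move=> HU Hf. elim: s => [|a s IH].
- rewrite sR_nil big1 // => t _ /=. ring.
- rewrite sR_cons IH -(sR_pick G HU (Hf a)) -sR_add. apply: eq_bigr => t _ /=.
  rewrite plus_INR. ring.
Qed.

Lemma sR_le_scal (T : Type) (F G : T -> R) B s : (forall i, 0 <= G i)%R ->
  (forall i, List.In i s -> F i <= B)%R -> (sR s (fun i => F i * G i) <= B * sR s G)%R.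
Proof.
move=> HG HF. rewrite -sR_scal. apply: sR_le => i Hi. have := HF i Hi. have := HG i. nra.
Qed.

Section Main.
Variable A : finType.
Variable x : nat -> A.
Variable u : seq A.
Hypothesis Hl : (0 < size u)%nat.
Local Notation l := (size u).
Variable L : nat.
Hypothesis HL : (0 < L)%nat.

Lemma cardA_pos : (0 < INR #|A|)%R.
Proof. apply: lt_0_INR. apply/ltP. apply/card_gt0P. by exists (x 0%nat). Qed.

Lemma cardA_ge1 : (1 <= INR #|A|)%R.
Proof. have : (0 < #|A|)%nat by apply/card_gt0P; exists (x 0%nat).
move=> H. change 1%R with (INR 1). apply: le_INR. apply/leP. exact H. Qed.

Lemma qR_ge1 : (1 <= qR u)%R.
Proof. apply: pow_R1_Rle. exact: cardA_ge1. Qed.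

Lemma l_pos : (0 < INR l)%R.
Proof. apply: lt_0_INR. apply/ltP. exact Hl. Qed.

Definition KM : R := (INR L / INR l + 1)%R.

Definition Gf (t : seq A) : R :=
  sR (seq.iota 0 l) (fun r => Rabs (qR u * INR (cnt u r t) - INR (Kc u r L))).

Lemma Gf_ge0 t : (0 <= Gf t)%R.
Proof. apply: sR_ge0 => r. exact: Rabs_pos. Qed.

Lemma Kc_le_KM r : (INR (Kc u r L) <= KM)%R.
Proof.
have H := Kc_bound Hl L r. have H2 : (INR (Kc u r L) * INR l <= INR L + INR l)%R.
  rewrite -mult_INR -plus_INR. apply: le_INR. apply/leP. exact H.
have Hp := l_pos. rewrite /KM.
apply: (Rmult_le_reg_r (INR l)) => //. field_simplify; lra.
Qed.

Lemma cnt_le r t : (qR u * INR (cnt u r t) <= KM + Gf t)%R.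
Proof.
rewrite cnt_mod. have Hr : (r %% l < l)%nat by rewrite ltn_pmod.
move: (r %% l) Hr => r' Hr.
have Hr' : r' \in seq.iota 0 l by rewrite mem_iota add0n.
have H3 := @sR_ge_term _ (fun r => Rabs (qR u * INR (cnt u r t) - INR (Kc u r L))) _ _ (fun r => Rabs_pos _) Hr'.
rewrite -/(Gf t) in H3. have H2 := Kc_le_KM r'.
have := Rle_abs (qR u * INR (cnt u r' t) - INR (Kc u r' L)). lra.
Qed.

Lemma main_le N :
  (qR u * INR (occN (word_prefix x (L * N)) u) <=
   INR N * (INR l * qR u + KM) +
   sR (words A L) (fun t => INR (occN (word_prefix x (L * N)) t) * Gf t))%R.
Proof.
have Hq := qR_ge1.
have H1 : (INR (occN (word_prefix x (L * N)) u) <=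
    sR (seq.iota 0 N) (fun j => INR (l + cnt u (j * L) (blk x L j))))%R.
  rewrite -INR_sum. apply: le_INR. apply/leP. exact: occ_blocks_le.
eapply Rle_trans; first by apply: Rmult_le_compat_l; [lra | exact H1].
rewrite -sR_scal.
eapply Rle_trans.
  apply: (@sR_le _ _ (fun j => (INR l * qR u + KM) + Gf (blk x L j))%R) => j _.
  rewrite plus_INR. have := cnt_le (j * L) (blk x L j). nra.
rewrite sR_add sR_const size_iota.
rewrite (@sR_regroup _ _ (seq.iota 0 N) (blk x L) (words A L) Gf (uniq_words A L)); last first.
  by move=> j; rewrite mem_words size_mkseq.
apply: Req_le. congr (_ + _)%R. apply: eq_big_seq => t; rewrite mem_words => /eqP Ht.
by rewrite occ_blocks.
Qed.

Lemma sum_Gf T : (0 < T)%R ->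
  (sR (words A L) Gf <= INR l * (INR #|A| ^ L * (KM * qR u / T + T)))%R.
Proof.
move=> HT. rewrite /Gf exchange_big /=.
have -> : INR l = INR (size (seq.iota 0 l)) by rewrite size_iota.
rewrite -sR_const. apply: sR_le => r _.
eapply Rle_trans.
  apply: (@sR_le _ _ (fun t => / T * (qR u * INR (cnt u r t) - INR (Kc u r L)) ^ 2 + T)%R) => t _. have := Rabs_le_sq (qR u * INR (cnt u r t) - INR (Kc u r L)) HT.
  rewrite /Rdiv Rmult_comm. lra.
rewrite sR_lin variance // size_words INR_expn.
have HK := Kc_le_KM r. have HK0 := pos_INR (Kc u r L). have Hq := qR_ge1.
have Ha : (0 < INR #|A| ^ L)%R by apply: pow_lt; exact: cardA_pos.
have HiT : (0 < / T)%R by apply: Rinv_0_lt_compat.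
rewrite /Rdiv.
have : (INR (Kc u r L) * (qR u - 1) <= KM * qR u)%R by nra.
move=> H. 
have : (/ T * (INR #|A| ^ L * INR (Kc u r L) * (qR u - 1)) <= / T * (INR #|A| ^ L * (KM * qR u)))%R.
  apply: Rmult_le_compat_l; first lra. rewrite Rmult_assoc. apply: Rmult_le_compat_l; lra.
move=> H1. have -> : (INR #|A| ^ L * (KM * qR u * / T + T) = / T * (INR #|A| ^ L * (KM * qR u)) + INR #|A| ^ L * T)%R by ring. lra.
Qed.

Lemma occ_LN_bound N C T : (0 < T)%R -> (0 <= C)%R ->
  (forall t, t \in words A L -> INR (occN (word_prefix x (L * N)) t) <= C / INR #|A| ^ L * INR N)%R ->
  (qR u * INR (occN (word_prefix x (L * N)) u) <=
   INR N * (INR l * qR u + KM + C * INR l * (KM * qR u / T + T)))%R.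
Proof.
move=> HT HC Hb.
have H1 := main_le N.
have Ha : (0 < INR #|A| ^ L)%R by apply: pow_lt; exact: cardA_pos.
have HN := pos_INR N.
have HB : (0 <= C / INR #|A| ^ L * INR N)%R.
  apply: Rmult_le_pos => //. apply: Rmult_le_pos => //. left; exact: Rinv_0_lt_compat.
have H2 : (sR (words A L) (fun t => INR (occN (word_prefix x (L * N)) t) * Gf t) <=
           (C / INR #|A| ^ L * INR N) * sR (words A L) Gf)%R.
  apply: sR_le_scal; first exact: Gf_ge0.
  move=> t Ht. apply: Hb. elim: (words A L) Ht => [//|a s IH] /= [->|Hi].
  - by rewrite in_cons eqxx.
  - by rewrite in_cons IH ?orbT.
have H3 := sum_Gf HT.
have H4 : ((C / INR #|A| ^ L * INR N) * sR (words A L) Gf <=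
           (C / INR #|A| ^ L * INR N) * (INR l * (INR #|A| ^ L * (KM * qR u / T + T))))%R.
  by apply: Rmult_le_compat_l.
have -> : (INR N * (INR l * qR u + KM + C * INR l * (KM * qR u / T + T)) =
   INR N * (INR l * qR u + KM) + (C / INR #|A| ^ L * INR N) * (INR l * (INR #|A| ^ L * (KM * qR u / T + T))))%R.
  field. lra.
lra.
Qed.

End Main.

Lemma limsup_ev (f : nat -> R) c : Rbar_lt (LimSup_seq f) (Finite c) ->
  exists N, forall n, (N <= n)%nat -> (f n < c)%R.
Proof.
case: (ex_LimSup_seq f) => l Hl. rewrite (is_LimSup_seq_unique _ _ Hl).
case: l Hl => [r| |] Hl /= H.
- have Hp : (0 < c - r)%R by lra.
  case: (Hl (mkposreal _ Hp)) => _ [N HN]. exists N => n /leP Hn.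
  have := HN n Hn. rewrite /=. lra.
- by [].
- case: (Hl c) => N HN. exists N => n /leP Hn. exact: HN.
Qed.

Lemma ev_list (T : eqType) (s : seq T) (P : T -> nat -> Prop) :
  (forall t, t \in s -> exists N, forall n, (N <= n)%nat -> P t n) ->
  exists N, forall n, (N <= n)%nat -> forall t, t \in s -> P t n.
Proof.
elim: s => [|a s IH] H; first by exists 0%nat.
case: (H a (mem_head _ _)) => N1 H1.
case: IH => [t Ht|N2 H2]; first by apply: H; rewrite in_cons Ht orbT.
exists (maxn N1 N2) => n Hn t. rewrite in_cons => /orP [/eqP ->|Ht].
- apply: H1. apply: leq_trans Hn. exact: leq_maxl.
- apply: H2 => //. apply: leq_trans Hn. exact: leq_maxr.
Qed.

Lemma archi_nat (X : R) : exists m : nat, (X < INR m)%R.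
Proof. case: (INR_archimed 1 X) => [|m Hm]; first lra. exists m. lra. Qed.

Lemma key_arith l L q C eps : (0 < l)%R -> (l <= L)%R -> (1 <= q)%R -> (0 < C)%R -> (0 < eps)%R ->
  ((l ^ 2 + l + C * l ^ 2 * (8 * C * l / eps)) * 4 / eps < L)%R ->
  (l / L * ((l * q + (L / l + 1) + C * l * ((L / l + 1) * q / (8 * C * l / eps) + 8 * C * l / eps)) / q)
   <= / q + eps / 2)%R.
Proof.
move=> Hl HlL Hq HC He HL.
set T := (8 * C * l / eps)%R in HL *.
have HT : (0 < T)%R by rewrite /T; apply: Rdiv_lt_0_compat => //; nra.
have HLp : (0 < L)%R by lra.
set y := (/ L)%R.
have Hy : (0 < y)%R by apply: Rinv_0_lt_compat.
have HyL : (y * L = 1)%R by rewrite /y; field; lra.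
have Hly : (l * y <= 1)%R by nra.
have Hiq : (0 < / q <= 1)%R.
  split; first by apply: Rinv_0_lt_compat; lra.
  rewrite -Rinv_1. apply: Rinv_le_contravar; lra.
set K := (l ^ 2 + l + C * l ^ 2 * T)%R in HL.
have HK : (0 < K)%R by rewrite /K; have := Rmult_lt_0_compat _ _ HC HT; nra.
have HKy : (K * y < eps / 4)%R.
  have E1 : (eps / 4 * (K * 4 / eps) = K)%R by field; lra.
  have HL' := Rmult_lt_compat_l (eps / 4) _ _ ltac:(lra) HL.
  have E2 : (eps / 4 * L * y = eps / 4)%R by rewrite /y; field; lra.
  have := Rmult_lt_compat_r y _ _ Hy HL'. rewrite E1 E2. lra.
have HClT : (C * l / T = eps / 8)%R by rewrite /T; field; lra.
have -> : (l / L * ((l * q + (L / l + 1) + C * l * ((L / l + 1) * q / T + T)) / q) =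
  l ^ 2 * y + / q + (l * y) * / q + (C * l / T) * (1 + l * y) + (C * l ^ 2 * T * y) * / q)%R.
  rewrite /y. field. lra.
rewrite HClT.
have aux : forall a, (0 <= a)%R -> (a * / q <= a)%R.
  move=> a Ha. have := Rmult_le_compat_l a (/ q) 1 Ha (proj2 Hiq). lra.
have H1 : ((l * y) * / q <= l * y)%R by apply: aux; nra.
have H2 : ((C * l ^ 2 * T * y) * / q <= C * l ^ 2 * T * y)%R.
  apply: aux.
  apply: Rmult_le_pos; last lra. apply: Rmult_le_pos; last lra.
  apply: Rmult_le_pos; [lra | nra].
have H3 : (eps / 8 * (1 + l * y) <= eps / 4)%R by nra.
have : (K * y = l ^ 2 * y + l * y + C * l ^ 2 * T * y)%R by rewrite /K; ring.
lra.
Qed.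

Section Final.
Variable A : finType.
Variable x : nat -> A.

Definition Hyp (C : R) := forall m : nat, exists l : nat, (m <= l)%nat /\
      forall w : seq A, size w = l ->
        Rbar_lt
          (LimSup_seq (fun N => (INR (aligned_occ (word_prefix x (l * N)%nat) w) / INR N)%R))
          (Finite (C / (INR #|A| ^ l))%R).

Lemma occ_mono_prefix (u : seq A) m n : (0 < size u)%nat -> (m <= n)%nat ->
  (occN (word_prefix x m) u <= occN (word_prefix x n) u)%nat.
Proof.
move=> Hu Hmn. have -> : n = (m + (n - m))%nat by lia.
rewrite prefix_add. exact: occ_mono.
Qed.

Lemma UB C (u : seq A) eps : (0 < C)%R -> Hyp C -> (0 < size u)%nat -> (0 < eps)%R ->
  exists M0, forall M, (M0 <= M)%nat ->
    (INR (occN (word_prefix x (size u * M)) u) <= (/ qR u + eps) * INR M)%R.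
Proof.
move=> HC H Hu He.
have Hlr := l_pos Hu.
have Hq := qR_ge1 x u.
pose T := (8 * C * INR (size u) / eps)%R.
have HT : (0 < T)%R by rewrite /T; apply: Rdiv_lt_0_compat => //; nra.
pose X := ((INR (size u) ^ 2 + INR (size u) + C * INR (size u) ^ 2 * T) * 4 / eps)%R.
case: (archi_nat X) => m Hm.
case: (H (maxn m (size u))) => L [HmL HL].
have HlL : (size u <= L)%nat by apply: leq_trans HmL; exact: leq_maxr.
have HmL' : (m <= L)%nat by apply: leq_trans HmL; exact: leq_maxl.
have HL0 : (0 < L)%nat by apply: leq_trans HlL.
have HXL : (X < INR L)%R. apply: Rlt_le_trans Hm _. apply: le_INR. exact/leP.
have HlLr : (INR (size u) <= INR L)%R by apply: le_INR; exact/leP.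
have Ha : (0 < INR #|A| ^ L)%R by apply: pow_lt; exact: cardA_pos x.
have Hev : exists N0, forall N, (N0 <= N)%nat -> forall t, t \in words A L ->
    (INR (occN (word_prefix x (L * N)) t) <= C / INR #|A| ^ L * INR N)%R.
  apply: ev_list => t Ht. have Hs : size t = L by apply/eqP; rewrite -mem_words.
  case: (limsup_ev (HL t Hs)) => N1 HN1. exists (maxn N1 1) => N HN.
  have := HN1 N (leq_trans (leq_maxl _ _) HN). rewrite occ_norm ?Hs //.
  have HNp : (0 < INR N)%R. apply: lt_0_INR. apply/ltP. apply: leq_trans HN. exact: leq_maxr.
  move=> Hlt.
  have E : (INR (occN (word_prefix x (L * N)) t) =
            INR (occN (word_prefix x (L * N)) t) / INR N * INR N)%R by field; lra.
  rewrite E. apply: Rmult_le_compat_r; lra.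
case: Hev => N0 HN0.
pose E := ((INR (size u) * qR u + KM u L + C * INR (size u) * (KM u L * qR u / T + T)) / qR u)%R.
have Hbound : forall N, (N0 <= N)%nat -> (INR (occN (word_prefix x (L * N)) u) <= INR N * E)%R.
  move=> N HN. have := occ_LN_bound Hu HL0 HT (ltac:(lra) : (0 <= C)%R) (HN0 N HN).
  move=> H1. rewrite /E.
  have -> : (INR N * ((INR (size u) * qR u + KM u L + C * INR (size u) * (KM u L * qR u / T + T)) / qR u) =
     / qR u * (INR N * (INR (size u) * qR u + KM u L + C * INR (size u) * (KM u L * qR u / T + T))))%R.
    field; lra.
  have -> : (INR (occN (word_prefix x (L * N)) u) = / qR u * (qR u * INR (occN (word_prefix x (L * N)) u)))%R.
    field; lra.
  apply: Rmult_le_compat_l => //. left. apply: Rinv_0_lt_compat. lra.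
have Hkey : (INR (size u) / INR L * E <= / qR u + eps / 2)%R.
  rewrite /E /KM /T. apply: key_arith => //. 
have HKM : (0 < KM u L)%R.
  rewrite /KM. have : (0 <= INR L / INR (size u))%R.
    apply: Rmult_le_pos; [exact: pos_INR | left; exact: Rinv_0_lt_compat].
  lra.
have HE0 : (0 < E)%R.
  rewrite /E. apply: Rdiv_lt_0_compat; last lra.
  have : (0 < KM u L * qR u / T + T)%R.
    have : (0 < KM u L * qR u / T)%R by apply: Rdiv_lt_0_compat => //; nra.
    lra.
  move=> H2. have : (0 < C * INR (size u) * (KM u L * qR u / T + T))%R.
    apply: Rmult_lt_0_compat => //. nra.
  nra.
case: (archi_nat (2 * E / eps)) => M1 HM1.
exists (maxn (L * N0) M1) => M HM.
have HM1' : (M1 <= M)%nat by apply: leq_trans HM; exact: leq_maxr.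
have HMN : (L * N0 <= M)%nat by apply: leq_trans HM; exact: leq_maxl.
pose N := ((size u * M) %/ L + 1)%nat.
have HNN0 : (N0 <= N)%nat.
  have : (N0 <= (size u * M) %/ L)%nat.
    rewrite leq_divRL //. apply: leq_trans (_ : M <= size u * M)%nat; first by rewrite mulnC.
    by rewrite leq_pmull.
  rewrite /N. lia.
have HdN := divn_eq (size u * M) L. have HmN := ltn_pmod (size u * M) HL0.
have HlMN : (size u * M <= L * N)%nat.
  rewrite /N. move: HdN HmN. move: ((size u * M) %/ L) ((size u * M) %% L) => q0 r0. nia.
have HNL : (INR N * INR L <= INR (size u) * INR M + INR L)%R.
  rewrite -!mult_INR -plus_INR. apply: le_INR. apply/leP. rewrite /N.
  move: HdN HmN. move: ((size u * M) %/ L) ((size u * M) %% L) => q0 r0. nia.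
have HLr : (0 < INR L)%R by apply: lt_0_INR; apply/ltP.
have HN' : (INR N <= INR (size u) / INR L * INR M + 1)%R.
  apply: (Rmult_le_reg_r (INR L)) => //.
  have -> : ((INR (size u) / INR L * INR M + 1) * INR L = INR (size u) * INR M + INR L)%R by field; lra.
  exact: HNL.
have Hocc : (INR (occN (word_prefix x (size u * M)) u) <= INR (occN (word_prefix x (L * N)) u))%R.
  apply: le_INR. apply/leP. exact: occ_mono_prefix.
have HB := Hbound N HNN0.
have HMr : (2 * E / eps < INR M)%R.
  apply: Rlt_le_trans HM1 _. apply: le_INR. exact/leP.
have HEM : (E <= eps / 2 * INR M)%R.
  have : (2 * E / eps * eps < INR M * eps)%R by apply: Rmult_lt_compat_r.
  have -> : (2 * E / eps * eps = 2 * E)%R by field; lra.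
  lra.
have H5 : (INR N * E <= (INR (size u) / INR L * INR M + 1) * E)%R by apply: Rmult_le_compat_r; lra.
have H6 : (INR (size u) / INR L * INR M * E <= (/ qR u + eps / 2) * INR M)%R.
  have -> : (INR (size u) / INR L * INR M * E = INR (size u) / INR L * E * INR M)%R by ring.
  apply: Rmult_le_compat_r => //. exact: pos_INR.
lra.
Qed.


Lemma sum_words_occ l M : (0 < l)%nat ->
  INR M = sR (words A l) (fun t => INR (occN (word_prefix x (l * M)) t)).
Proof.
move=> Hl.
have H := @sR_regroup _ _ (seq.iota 0 M) (blk x l) (words A l) (fun _ => 1%R) (uniq_words A l).
rewrite sR_const size_iota Rmult_1_r in H. rewrite H; last first.
  by move=> j; rewrite mem_words size_mkseq.
apply: eq_big_seq => t; rewrite mem_words => /eqP Ht.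
by rewrite Rmult_1_r occ_blocks.
Qed.

Lemma qR_size (t u : seq A) : size t = size u -> qR t = qR u.
Proof. by rewrite /qR => ->. Qed.

Lemma g_lim C (u : seq A) : (0 < C)%R -> Hyp C -> (0 < size u)%nat ->
  is_lim_seq (fun M => INR (occN (word_prefix x (size u * M)) u) / INR M)%R (/ qR u)%R.
Proof.
move=> HC H Hu. apply/is_lim_seq_spec => eps.
have Hq := qR_ge1 x u.
have Hqp : (0 < qR u)%R by lra.
pose e := (eps / (2 * qR u))%R.
have He : (0 < e)%R by rewrite /e; apply: Rdiv_lt_0_compat; [exact: cond_pos | lra].
have Hev : exists M0, forall M, (M0 <= M)%nat -> forall t, t \in words A (size u) ->
    (INR (occN (word_prefix x (size u * M)) t) <= (/ qR u + e) * INR M)%R.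
  apply: ev_list => t Ht. have Hs : size t = size u by apply/eqP; rewrite -mem_words.
  case: (UB HC H (ltac:(by rewrite Hs) : (0 < size t)%nat) He) => M0 HM0.
  exists M0 => M HM. rewrite -(qR_size Hs) -Hs. exact: HM0.
case: Hev => M0 HM0.
exists (maxn M0 1) => M /leP HM.
have HM0' : (M0 <= M)%nat by apply: leq_trans HM; exact: leq_maxl.
have HMp : (0 < INR M)%R. apply: lt_0_INR. apply/ltP. apply: leq_trans HM. exact: leq_maxr.
have Hup := HM0 M HM0' u (ltac:(by rewrite mem_words) : u \in words A (size u)).
have Hsum := sum_words_occ M Hu.
rewrite (bigD1_seq u) /= ?mem_words ?uniq_words // in Hsum.
rewrite -big_filter in Hsum.
have Hsz : INR (size [seq t <- words A (size u) | t != u]) = (qR u - 1)%R.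
  rewrite size_filter.
  have Hc := count_predC (pred1 u) (words A (size u)).
  have Hc1 : count (pred1 u) (words A (size u)) = 1%nat.
    by rewrite count_uniq_mem ?uniq_words // mem_words eqxx.
  have -> : count (fun t => t != u) (words A (size u)) = (size (words A (size u)) - 1)%nat.
    rewrite -Hc Hc1. have -> : count (fun t => t != u) (words A (size u)) = count (predC (pred1 u)) (words A (size u)) by [].
    lia.
  rewrite minus_INR; last first. apply/leP. rewrite size_words expn_gt0. apply/orP; left. 
    apply/card_gt0P. by exists (x 0%nat).
  by rewrite size_words INR_expn.
move: Hsum. set S := (X in _ = _ + X). move=> Hsum.
have Hrest : (S <= (qR u - 1) * ((/ qR u + e) * INR M))%R.
  rewrite /S -Hsz -sR_const. apply: sR_le => t Ht. apply: HM0 => //.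
  have : t \in [seq t <- words A (size u) | t != u].
    elim: (filter _ _) Ht => [//|b s IH] /= [->|Hi]; first by rewrite mem_head.
    by rewrite in_cons IH ?orbT.
  by rewrite mem_filter => /andP [].

set a := INR (occN (word_prefix x (size u * M)) u) in Hup Hsum *.
have Hdiv : (a / INR M - / qR u = (a - INR M / qR u) / INR M)%R by field; lra.
rewrite Hdiv. apply: Rabs_def1.
- apply: (Rmult_lt_reg_r (INR M)) => //. rewrite /Rdiv Rmult_assoc Rinv_l; last lra.
  rewrite Rmult_1_r.
  have : (e * INR M < eps * INR M)%R.
    apply: Rmult_lt_compat_r => //. rewrite /e.
    have := cond_pos eps. move=> Hep.
    apply: (Rmult_lt_reg_r (2 * qR u)); first lra.
    have -> : (eps / (2 * qR u) * (2 * qR u) = eps)%R by field; lra.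
    nra.
  idtac.
  nra.
- apply: (Rmult_lt_reg_r (INR M)) => //. rewrite /Rdiv Rmult_assoc Rinv_l; last lra.
  rewrite Rmult_1_r.
  have Hq1 : (0 <= qR u - 1)%R by lra.
  have : ((qR u - 1) * e * INR M < eps * INR M)%R.
    apply: Rmult_lt_compat_r => //. rewrite /e.
    have := cond_pos eps. move=> Hep.
    have -> : ((qR u - 1) * (eps / (2 * qR u)) = eps * ((qR u - 1) / (2 * qR u)))%R by field; lra.
    have : ((qR u - 1) / (2 * qR u) < 1)%R.
      apply: (Rmult_lt_reg_r (2 * qR u)); first lra.
      have -> : ((qR u - 1) / (2 * qR u) * (2 * qR u) = qR u - 1)%R by field; lra.
      lra.
    nra.
  have E1 : ((qR u - 1) * ((/ qR u + e) * INR M) = INR M - INR M / qR u + (qR u - 1) * e * INR M)%R.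
    field; lra.
  lra.
Qed.

Lemma frac_le a b c d : (0 < b)%R -> (0 < d)%R -> (a * d <= c * b)%R -> (a / b <= c / d)%R.
Proof.
move=> Hb Hd H.
have -> : (a / b = (a * d) * / (b * d))%R by field; lra.
have -> : (c / d = (c * b) * / (b * d))%R by field; lra.
apply: Rmult_le_compat_r => //. left. apply: Rinv_0_lt_compat. nra.
Qed.

Lemma div_tends l : (0 < l)%nat -> filterlim (fun n => n %/ l)%nat eventually eventually.
Proof.
move=> Hl P [N HN]. exists (N * l)%nat => n /leP Hn. apply: HN. apply/leP.
by rewrite leq_divRL.
Qed.

Lemma mul_tends l : (0 < l)%nat -> filterlim (fun n => l * n)%nat eventually eventually.
Proof.
move=> Hl P [N HN]. exists N => n /leP Hn. apply: HN. apply/leP.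
apply: leq_trans Hn _. by rewrite leq_pmull.
Qed.

Lemma lim_inv_n : is_lim_seq (fun n => / INR n)%R 0%R.
Proof. by have := is_lim_seq_inv _ _ is_lim_seq_INR; apply. Qed.

Lemma lim_r1 : is_lim_seq (fun M => INR M / INR (M + 1))%R 1%R.
Proof.
have H : is_lim_seq (fun M => 1 - / INR (S M))%R (1 - 0)%R.
  apply: is_lim_seq_minus'; first exact: is_lim_seq_const.
  by have := (proj1 (is_lim_seq_incr_1 _ _)) lim_inv_n.
rewrite Rminus_0_r in H. apply: is_lim_seq_ext H => M.
rewrite addn1 S_INR. field. have := pos_INR M. lra.
Qed.

Lemma lim_r2 : is_lim_seq (fun M => INR (M + 1) / INR M)%R 1%R.
Proof.
have H : is_lim_seq (fun M => 1 + / INR M)%R (1 + 0)%R.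
  apply: is_lim_seq_plus'; first exact: is_lim_seq_const. exact: lim_inv_n.
rewrite Rplus_0_r in H. apply: is_lim_seq_ext_loc H. exists 1%nat => M /leP HM.
rewrite addn1 S_INR. field. have : (0 < INR M)%R by apply: lt_0_INR; apply/ltP. lra.
Qed.

Lemma f_lim C (u : seq A) : (0 < C)%R -> Hyp C -> (0 < size u)%nat ->
  is_lim_seq (fun n => INR (aligned_occ (word_prefix x n) u) / (INR n / INR (size u)))%R
    (Finite (/ (INR #|A| ^ size u))%R).
Proof.
move=> HC H Hu.
have Hg := g_lim HC H Hu.
set g := (fun M => INR (occN (word_prefix x (size u * M)) u) / INR M)%R in Hg.
have L1 : is_lim_seq (fun n => g (n %/ size u)%nat * (INR (n %/ size u) / INR (n %/ size u + 1)))%R (/ qR u)%R.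
  have := is_lim_seq_mult' _ _ _ _ Hg lim_r1. rewrite Rmult_1_r => H1.
  exact: (is_lim_seq_subseq _ _ _ (div_tends Hu) H1).
have Hg1 : is_lim_seq (fun M => g (M + 1)%nat) (/ qR u)%R.
  have := (proj1 (is_lim_seq_incr_1 _ _)) Hg. apply: is_lim_seq_ext => M. by rewrite addn1.
have L2 : is_lim_seq (fun n => g (n %/ size u + 1)%nat * (INR (n %/ size u + 1) / INR (n %/ size u)))%R (/ qR u)%R.
  have := is_lim_seq_mult' _ _ _ _ Hg1 lim_r2. rewrite Rmult_1_r => H1.
  exact: (is_lim_seq_subseq _ _ (fun n => n %/ size u)%nat (div_tends Hu) H1).
apply: (is_lim_seq_le_le_loc _ _ _ _ _ L1 L2).
exists (size u) => n /leP Hn.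
pose M := (n %/ size u)%nat.
have HM1 : (1 <= M)%nat by rewrite /M leq_divRL // mul1n.
have Hd := divn_eq n (size u). have Hm := ltn_pmod n Hu.
have HlM : (size u * M <= n)%nat.
  rewrite /M. move: Hd Hm. move: (n %/ size u)%nat (n %% size u)%nat => q0 r0. nia.
have HlM1 : (n <= size u * (M + 1))%nat.
  rewrite /M. move: Hd Hm. move: (n %/ size u)%nat (n %% size u)%nat => q0 r0. nia.
rewrite -/M /g occ_norm //.
have Hb := occ_mono_prefix Hu HlM. have Hc := occ_mono_prefix Hu HlM1.
move: Hb Hc. rewrite -/M.
set a := occN (word_prefix x n) u. set b := occN (word_prefix x (size u * M)) u.
set c := occN (word_prefix x (size u * (M + 1))) u.
move=> Hb Hc.
have Hbr : (INR b <= INR a)%R by apply: le_INR; apply/leP.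
have Hcr : (INR a <= INR c)%R by apply: le_INR; apply/leP.
have Hlr : (0 < INR (size u))%R by apply: lt_0_INR; apply/ltP.
have HMr : (1 <= INR M)%R by change 1%R with (INR 1); apply: le_INR; apply/leP.
have Hnr1 : (INR (size u) * INR M <= INR n)%R by rewrite -mult_INR; apply: le_INR; apply/leP.
have Hnr2 : (INR n <= INR (size u) * (INR M + 1))%R.
  have -> : (INR M + 1 = INR (M + 1))%R by rewrite plus_INR.
  by rewrite -mult_INR; apply: le_INR; apply/leP.
have Hnp : (0 < INR n)%R by nra.
have HM1r : (INR (M + 1) = INR M + 1)%R by rewrite plus_INR.
have Ha0 := pos_INR a. have Hb0 := pos_INR b.
rewrite HM1r.
split.
- have -> : (INR b / INR M * (INR M / (INR M + 1)) = INR b / (INR M + 1))%R by field; lra.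
  have -> : (INR a / (INR n / INR (size u)) = (INR a * INR (size u)) / INR n)%R by field; lra.
  apply: frac_le; try lra. nra.
- have -> : (INR c / (INR M + 1) * ((INR M + 1) / INR M) = INR c / INR M)%R by field; lra.
  have -> : (INR a / (INR n / INR (size u)) = (INR a * INR (size u)) / INR n)%R by field; lra.
  apply: frac_le; try lra. nra.
Qed.
End Final.

Theorem lemma15 (A : finType) (x : nat -> A) :
  normal x <->
  exists C : R, (0 < C)%R /\
    forall m : nat, exists l : nat, (m <= l)%nat /\
      forall w : seq A, size w = l ->
        Rbar_lt
          (LimSup_seq (fun N => (INR (aligned_occ (word_prefix x (l * N)%nat) w) / INR N)%R))
          (Finite (C / (INR #|A| ^ l))%R).
Proof.
split.
- move=> Hn. exists 2%R. split; first lra. move=> m. exists m.+1. split; first exact: leqnSn.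
  move=> w Hw.
  have Hl : (0 < m.+1)%nat by [].
  have H := Hn m.+1 w Hl Hw.
  have H2 := is_lim_seq_subseq _ _ _ (mul_tends Hl) H.
  have Hlr : (0 < INR m.+1)%R by apply: lt_0_INR; apply/ltP.
  have H3 : is_lim_seq (fun N => INR (aligned_occ (word_prefix x (m.+1 * N)%nat) w) / INR N)%R
              (/ (INR #|A| ^ m.+1))%R.
    apply: is_lim_seq_ext_loc H2. exists 1%nat => N /leP HN.
    have : (0 < INR N)%R by apply: lt_0_INR; apply/ltP.
    move=> HNr. rewrite mult_INR. field. lra.
  rewrite (is_LimSup_seq_unique _ _ (is_lim_LimSup_seq _ _ H3)).
  have Ha : (0 < INR #|A| ^ m.+1)%R by apply: pow_lt; exact: cardA_pos x.
  have Hi : (0 < / INR #|A| ^ m.+1)%R by apply: Rinv_0_lt_compat.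
  change (Rlt (/ (INR #|A| ^ m.+1)) (2 / (INR #|A| ^ m.+1))).
  rewrite /Rdiv. lra.
- move=> [C [HC H]] l u Hl Hs. subst l. exact: (f_lim HC H Hl).
Qed.
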